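(* Assume $\int_{(0,1)}\upsilon^p\lambda(d\upsilon)<\infty$ for some $p\in(1,2)$. Then for every $q\ge1$ there is a constant $\mathbf C_q$ such that for every $m\ge1$ and every $h\in(0,1)$, $$\int_{(0,q)^m}\mathbf 1_{\{\prod_{j=1}^m u_j\le h\,q^m\}}\prod_{i=1}^m u_i^2\,\lambda(du_i)\le h^{2-p}(\mathbf C_q)^m\sum_{\ell=1}^m\frac{(2-p)^{-\ell}}{(m-\ell)!}\big[\log(1/h)\big]^{m-\ell}.$$ In particular, for every $\varepsilon\in(0,2-p)$, $$\int_{(0,q)^m}\mathbf 1_{\{\prod_{j=1}^m u_j\le h\,q^m\}}\prod_{i=1}^m u_i^2\,\lambda(du_i)\le\frac{(\mathbf C_q/\varepsilon)^m}{2-p-\varepsilon}\,h^{2-p-\varepsilon}.$$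
   Context: $\lambda$ is a positive measure on $(0,\infty)$ with $\lambda([a,\infty))<\infty$ for every $a>0$. *)

(* Defs.v *)
From HB Require Import structures.
From mathcomp Require Import all_boot all_order all_algebra.
From mathcomp Require Import all_classical all_reals all_analysis.
Set Implicit Arguments. Unset Strict Implicit. Unset Printing Implicit Defensive.
Import Order.TTheory GRing.Theory Num.Theory.
Local Open Scope classical_set_scope.
Local Open Scope ring_scope.

(* m-fold integral over D^m with respect to the m-fold product of mu,
   written as an iterated integral (for nonnegative integrands and a
   sigma-finite mu this coincides with the integral against the product
   measure mu^{(x) m}, by Tonelli). *)
Fixpoint iter_integral (R : realType)
    (mu : {measure set R -> \bar R}) (D : set R) (m : nat)
    (g : seq R -> \bar R) : \bar R :=
  match m with
  | 0 => g [::]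
  | m'.+1 => (\int[mu]_(u in D) iter_integral mu D m' (fun s => g (u :: s)))%E
  end.

(* Main.v *)
Require Import Defs.
From HB Require Import structures.
From mathcomp Require Import all_boot all_order all_algebra.
From mathcomp Require Import all_classical all_reals all_analysis.
From mathcomp Require Import measurable_realfun lra.
Import Order.TTheory GRing.Theory Num.Theory.
Local Open Scope classical_set_scope.
Local Open Scope ring_scope.


Lemma le_integral_nm (R : realType) (mu : {measure set R -> \bar R}) (D : set R)
  (f g : R -> \bar R) :
  (forall x, D x -> (0 <= f x)%E) -> (forall x, D x -> (f x <= g x)%E) ->
  (\int[mu]_(x in D) f x <= \int[mu]_(x in D) g x)%E.
Proof.
move=> f0 fg.
have g0 : forall x, D x -> (0 <= g x)%E by move=> x Dx; exact: le_trans (f0 x Dx) (fg x Dx).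
rewrite (ge0_integralE mu f0) (ge0_integralE mu g0).
apply: ereal_sup_le => _ [h /= hf <-]; exists h => //= x.
apply: le_trans (hf x) _; rewrite /patch; case: ifP => // /set_mem Dx; exact: fg.
Qed.

Lemma iter_ge0 (R : realType) (mu : {measure set R -> \bar R}) (D : set R) m
  (f : seq R -> \bar R) :
  (forall s, all (fun x => x \in D) s -> (0 <= f s)%E) -> (0 <= iter_integral mu D m f)%E.
Proof.
elim: m f => [|m IH] f f0 /=; first exact: f0.
apply: integral_ge0 => x Dx; apply: IH => s hs; apply: f0 => /=.
by rewrite hs andbT; apply/mem_set.
Qed.

Lemma iter_le (R : realType) (mu : {measure set R -> \bar R}) (D : set R) m
  (f g : seq R -> \bar R) :
  (forall s, all (fun x => x \in D) s -> (0 <= f s)%E) ->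
  (forall s, all (fun x => x \in D) s -> (f s <= g s)%E) ->
  (iter_integral mu D m f <= iter_integral mu D m g)%E.
Proof.
elim: m f g => [|m IH] f g f0 fg /=; first exact: fg.
apply: le_integral_nm => x Dx.
  apply: iter_ge0 => s hs; apply: f0 => /=; by rewrite hs andbT; apply/mem_set.
by apply: IH => s hs; [apply: f0|apply: fg] => /=; rewrite hs andbT; apply/mem_set.
Qed.


Lemma iter_prod (R : realType) (mu : {measure set R -> \bar R}) (D : set R)
  (mD : measurable D) (phi : R -> R) (A : R)
  (mphi : measurable_fun D phi) (phi0 : forall x, 0 <= phi x)
  (hA : (\int[mu]_(x in D) (phi x)%:E = A%:E)%E) m :
  forall c, 0 <= c ->
  iter_integral mu D m (fun s => (c * \prod_(u <- s) phi u)%:E) = (c * A ^+ m)%:E.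
Proof.
elim: m => [|m IH] c c0 /=; first by rewrite big_nil.
under eq_integral => x _.
  rewrite (_ : (fun s => _) = (fun s => ((c * phi x) * \prod_(u <- s) phi u)%:E)); last first.
    by apply: funext => s; rewrite big_cons mulrA.
  rewrite IH ?mulr_ge0//.
  rewrite (_ : c * phi x * A ^+ m = (c * A ^+ m) * phi x); last by rewrite mulrAC.
  rewrite EFinM.
  over.
rewrite /= ge0_integralZl_EFin //.
- transitivity ((c * A ^+ m)%:E * A%:E)%E; first by congr (_ * _)%E.
  by rewrite -EFinM exprSr mulrA.
- by move=> x _; rewrite lee_fin.
- exact/measurable_EFinP.
- rewrite mulr_ge0 // exprn_ge0 // -lee_fin -hA.
  by apply: integral_ge0 => x _; rewrite lee_fin.
Qed.


Lemma sq_split (R : realType) (p u : R) : 0 <= u -> u ^+ 2 = u `^ p * u `^ (2 - p).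
Proof.
move=> u0; rewrite -powRD; last by rewrite addrC subrK pnatr_eq0.
by rewrite addrC subrK (powR_mulrn 2 u0).
Qed.

Lemma prod_sq (R : realType) (p : R) (s : seq R) : all (fun u => 0 <= u) s ->
  \prod_(u <- s) u ^+ 2 = (\prod_(u <- s) u `^ p) * (\prod_(u <- s) u) `^ (2 - p).
Proof.
elim: s => [|u s IH] /=; first by rewrite !big_nil powR1 mulr1.
move=> /andP[u0 hs]; rewrite !big_cons IH // powRM //; last first.
  by rewrite big_seq; apply: prodr_ge0 => x xs; exact: (allP hs x xs).
rewrite (@sq_split _ p u u0) mulrACA //.
Qed.


Lemma pt_bound (R : realType) (p h q : R) m (s : seq R) : 0 <= 2 - p ->
  all (fun u => 0 <= u) s -> 0 <= h -> 0 <= q -> \prod_(u <- s) u <= h * q ^+ m ->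
  \prod_(u <- s) u ^+ 2 <= (h `^ (2 - p) * (q `^ (2 - p)) ^+ m) * \prod_(u <- s) u `^ p.
Proof.
move=> p2 hs h0 q0 hP.
have P0 : 0 <= \prod_(u <- s) u.
  by rewrite big_seq; apply: prodr_ge0 => x xs; exact: (allP hs x xs).
rewrite (@prod_sq _ p s hs) mulrC ler_wpM2r //.
  by rewrite big_seq; apply: prodr_ge0 => x xs; exact: powR_ge0.
have -> : (q `^ (2 - p)) ^+ m = (q ^+ m) `^ (2 - p).
  by rewrite -powR_mulrn ?powR_ge0 // -powRrM mulrC powRrM powR_mulrn.
rewrite -powRM ?exprn_ge0 //.
by apply: ge0_ler_powR => //; rewrite nnegrE ?mulr_ge0 ?exprn_ge0.
Qed.


Lemma le_mulinv (R : realType) (a c : R) : 0 <= a -> 0 < c -> c <= 1 -> a <= a * c^-1.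
Proof.
move=> a0 c0 c1; rewrite -{1}[a]mulr1 ler_wpM2l //.
by rewrite invf_ge1.
Qed.

Lemma S_ge1 (R : realType) (p h : R) m : 1 < p -> p < 2 -> 0 < h < 1 -> (1 <= m)%N ->
  1 <= \sum_(1 <= l < m.+1)
          ((2 - p) ^- l / ((m - l)`!)%:R * (ln (1 / h)) ^+ (m - l)).
Proof.
move=> p1 p2 /andP[h0 h1] m1.
have q0 : 0 < 2 - p by lra.
have q1 : 2 - p <= 1 by lra.
have lnp : 0 < ln (1 / h) by apply: ln_gt0; rewrite div1r invf_gt1.
rewrite big_nat_recr //= subnn fact0 expr0 divr1 mulr1.
have F1 : 1 <= (2 - p) ^- m.
  rewrite invf_ge1; last exact: exprn_gt0.
  exact: exprn_ile1 (ltW q0) q1.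
apply: le_trans F1 _; rewrite -subr_ge0 addrK.
apply: sumr_ge0 => i _; apply: mulr_ge0; last by apply: exprn_ge0; exact: ltW.
apply: divr_ge0; last exact: ler0n.
by rewrite invr_ge0; apply: exprn_ge0; exact: ltW.
Qed.

Lemma fin1 (R : realType) (p h B S : R) m : 0 <= B -> 1 <= S ->
  h `^ (2 - p) * B ^+ m <= h `^ (2 - p) * (B + 1) ^+ m * S.
Proof.
move=> B0 S1; rewrite -mulrA ler_wpM2l ?powR_ge0 //.
rewrite -[X in X <= _]mulr1 ler_pM ?exprn_ge0 //.
by apply: lerXn2r; rewrite ?nnegrE ?addr_ge0 // lerDl.
Qed.

Lemma fin2 (R : realType) (p h B eps : R) m : 1 < p -> p < 2 -> 0 < h < 1 -> 0 <= B ->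
  0 < eps < 2 - p ->
  h `^ (2 - p) * B ^+ m <= ((B + 1) / eps) ^+ m / (2 - p - eps) * h `^ (2 - p - eps).
Proof.
move=> p1 p2 /andP[h0 h1] B0 /andP[e0 e1].
rewrite mulrC; apply: ler_pM; rewrite ?exprn_ge0 ?powR_ge0 //; last first.
  by apply: ger_powR; [rewrite h0 ltW | lra].
have c0 : 0 < 2 - p - eps by lra.
have c1 : 2 - p - eps <= 1 by lra.
have X0 : 0 <= ((B + 1) / eps) ^+ m.
  by rewrite exprn_ge0 // divr_ge0 ?addr_ge0 // ltW.
apply: (@le_trans _ _ (((B + 1) / eps) ^+ m)); last exact: le_mulinv X0 c0 c1.
apply: lerXn2r; rewrite ?nnegrE ?divr_ge0 ?addr_ge0 // ?ltW //.
apply: (@lt_le_trans _ _ (B + 1)); first by rewrite ltrDl.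
apply: le_mulinv; rewrite ?addr_ge0 //; lra.
Qed.


Lemma fin_int (R : realType) (lam : {measure set R -> \bar R})
  (lam_tail : forall a : R, 0 < a -> (lam `[a, +oo[%classic < +oo)%E)
  (p : R) (p1 : 1 < p)
  (hint : (\int[lam]_(v in `]0%R, 1%R[) (v `^ p)%:E < +oo)%E) (q : R) (q1 : 1 <= q) :
  (\int[lam]_(v in `]0%R, q[) (v `^ p)%:E < +oo)%E.
Proof.
have -> : `]0%R, q[%classic = `]0%R, 1%R[%classic `|` `[1%R, q[%classic :> set R.
  apply/seteqP; split => x /=; rewrite !in_itv /=.
    move=> /andP[x0 xq]; have [x1|x1] := ltP x 1; [left|right]; apply/andP; split => //.
  by move=> [|] /andP[a b]; apply/andP; split; lra.
rewrite integral_setU //; last 2 first.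
- apply/measurable_EFinP; apply: measurable_funTS; exact: measurable_powR.
- apply/disj_setPS => x [] /=; rewrite !in_itv /= => /andP[_ a] /andP[b _]; lra.
apply: lte_add_pinfty => //.
apply: (@le_lt_trans _ _ (\int[lam]_(v in `[1%R, q[) (q `^ p)%:E)%E).
  apply: le_integral_nm => x; rewrite /= in_itv /= => /andP[x1 xq].
    by rewrite lee_fin powR_ge0.
  rewrite lee_fin; apply: ge0_ler_powR; rewrite ?nnegrE; try lra.
rewrite integral_cst //.
apply: lte_mul_pinfty; rewrite ?lee_fin ?powR_ge0 //.
apply: (@le_lt_trans _ _ (lam `[1%R, +oo[%classic)); last exact: lam_tail.
apply: le_measure; rewrite ?inE //.
by move=> x /=; rewrite !in_itv /= => /andP[->].
Qed.
Theorem lemma4p8 (R : realType) (lam : {measure set R -> \bar R})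
  (lam_pos : lam `]-oo, 0]%classic = 0%E)
  (lam_tail : forall a : R, 0 < a -> (lam `[a, +oo[%classic < +oo)%E)
  (p : R) (p1 : 1 < p) (p2 : p < 2)
  (hint : (\int[lam]_(v in `]0%R, 1%R[) (v `^ p)%:E < +oo)%E) :
  forall q : R, 1 <= q ->
  exists Cq : R, 0 < Cq /\
    forall (m : nat) (h : R), (1 <= m)%N -> 0 < h < 1 ->
      let I := iter_integral lam `]0, q[ m
        (fun s => if \prod_(u <- s) u <= h * q ^+ m
                  then (\prod_(u <- s) u ^+ 2)%:E else 0%E) in
      (I <= (h `^ (2 - p) * Cq ^+ m *
              \sum_(1 <= l < m.+1)
                 ((2 - p) ^- l / ((m - l)`!)%:R * (ln (1 / h)) ^+ (m - l)))%:E)%E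
      /\ (forall eps : R, 0 < eps < 2 - p ->
            (I <= ((Cq / eps) ^+ m / (2 - p - eps) * h `^ (2 - p - eps))%:E)%E).
Proof.

Proof.
move=> q q1.
have mD : measurable (`]0%R, q[%classic : set R) by exact: measurable_itv.
have mphi : measurable_fun `]0%R, q[%classic (fun u : R => u `^ p).
  by apply: measurable_funTS; exact: measurable_powR.
have Jfin := @fin_int R lam lam_tail p p1 hint q q1.
set J := (\int[lam]_(v in `]0%R, q[) (v `^ p)%:E)%E in Jfin.
have J0 : (0 <= J)%E by apply: integral_ge0 => x _; rewrite lee_fin powR_ge0.
have hA : J = (fine J)%:E by rewrite fineK // ge0_fin_numE.
have A0 : 0 <= fine J by rewrite fine_ge0.
set A := fine J in hA A0.
set B := q `^ (2 - p) * A.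
have B0 : 0 <= B by rewrite mulr_ge0 // powR_ge0.
exists (B + 1); split; first by rewrite ltr_wpDl.
move=> m h m1 /andP[h0 h1] I.
have HI : (I <= (h `^ (2 - p) * B ^+ m)%:E)%E.
  rewrite /I.
  apply: (@le_trans _ _ (iter_integral lam `]0%R, q[ m
     (fun s => ((h `^ (2 - p) * (q `^ (2 - p)) ^+ m) * \prod_(u <- s) u `^ p)%:E))).
    apply: iter_le => s hs.
      by case: ifP => _; rewrite ?lee_fin // big_seq prodr_ge0 // => x _; rewrite sqr_ge0.
    have hs0 : all (fun u => 0 <= u) s.
      apply/allP => x xs; move/allP: hs => /(_ x xs) /set_mem /=; rewrite in_itv /=.
      by move=> /andP[/ltW].
    case: ifP => H.
      rewrite lee_fin; apply: pt_bound => //; try lra.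
    by rewrite lee_fin mulr_ge0 ?mulr_ge0 ?exprn_ge0 ?powR_ge0 // big_seq prodr_ge0 // => x _; rewrite powR_ge0.
  rewrite (@iter_prod _ lam _ mD (fun u => u `^ p) A mphi) //.
  - by rewrite lee_fin /B exprMn mulrA.
  - by move=> x; rewrite powR_ge0.
  - by rewrite mulr_ge0 ?exprn_ge0 ?powR_ge0.
split.
  apply: le_trans HI _; rewrite lee_fin; apply: fin1 => //.
  by apply: S_ge1 => //; rewrite h0 h1.
move=> eps he; apply: le_trans HI _; rewrite lee_fin; apply: fin2 => //.
by rewrite h0 h1.
Qed.
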